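(* Consider $\dot x=f(x,p)$ with $x\in\mathcal{D}\subset\mathbb{R}^n$, $p\in\mathcal{P}\subset\mathbb{R}^m$, satisfying assumptions A1–A4 below. Then for all $p_1,p_2\in\mathcal{P}$ with $p_1\succeq p_2$, $$\mathcal{B}(x^\ast(p_1))\subseteq\mathcal{B}(x^\ast(p_2)),\qquad \mathcal{B}(x^\bullet(p_1))\supseteq\mathcal{B}(x^\bullet(p_2)).$$ In particular, for all $p\in\mathcal{P}$, $$\mathcal{B}(x^\ast(p_{\min}))\subseteq\mathcal{B}(x^\ast(p))\subseteq\mathcal{B}(x^\ast(p_{\max})),\qquad \mathcal{B}(x^\bullet(p_{\min}))\supseteq\mathcal{B}(x^\bullet(p))\supseteq\mathcal{B}(x^\bullet(p_{\max})).$$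
   Context: The orders are standard: $x\succeq y$ iff $x-y\in\mathbb{R}^n_{\ge0}$ (similarly in $\mathbb{R}^m$), $x\gg y$ iff all components of $x-y$ are positive. $f$ is continuous in $(x,p)$ and locally Lipschitz in $x$; $\phi(t,x_0,p)$ denotes the solution with initial state $x_0$ and parameter $p$. $\mathcal{B}(x^\ast(p))$ denotes the basin of attraction of the equilibrium $x^\ast(p)$ for the system with parameter $p$ (the set of initial conditions in $\mathcal{D}$ whose solutions converge to it). The system is monotone in $x$ and $p$ if $\phi(t,x,p)\preceq\phi(t,y,q)$ for all $t\ge0$, all $x\preceq y$ in $\mathcal{D}$ and all $p\preceq q$ in $\mathcal{P}$. Bistability on $\mathcal{D}$ for a given $p$ means: $\mathcal{D}$ is forward invariant, the system has exactly two asymptotically stable equilibria $x^\ast(p),x^\bullet(p)$ in $\mathcal{D}$, solutions starting in $\mathcal{D}$ that do not converge to one of them start in the common boundary of the two basins, and $\mathrm{cl}(\mathcal{B}(x^\bullet(p)))=\mathrm{cl}(\mathcal{D}\setminus\mathcal{B}(x^\ast(p)))$. Assumptions: (A1) for every $p\in\mathcal{P}$ the system is bistable on $\mathcal{D}$ with stable equilibria $x^\ast(p)$, $x^\bullet(p)$, and the system is monotone in $x$ and $p$. (A2) $\mathcal{P}$ is compact and contains $p_{\min},p_{\max}$ with $p_{\min}\preceq p\preceq p_{\max}$ for all $p\in\mathcal{P}$. (A3) for all $p\in\mathcal{P}$: $x^\ast(p)\in\bigcap_{q\in\mathcal{P}}\mathcal{B}(x^\ast(q))$ and $x^\bullet(p)\in\bigcap_{q\in\mathcal{P}}\mathcal{B}(x^\bullet(q))$.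 (A4) $x^\bullet(p_{\min})\gg x^\ast(p_{\max})$. *)

(* Defs.v *)
From Stdlib Require Import Reals List.
From mathcomp Require Import ssreflect ssrbool fintype.
Open Scope R_scope.

Definition Vec (n : nat) : Type := 'I_n -> R.

Definition vle {n : nat} (x y : Vec n) : Prop := forall i : 'I_n, x i <= y i.
Definition vgg {n : nat} (x y : Vec n) : Prop := forall i : 'I_n, y i < x i.

(** Open ball of radius r for the max-norm (induces the standard topology of R^n). *)
Definition ball {n : nat} (x : Vec n) (r : R) (y : Vec n) : Prop :=
  forall i : 'I_n, Rabs (y i - x i) < r.

Definition is_open {n : nat} (U : Vec n -> Prop) : Prop :=
  forall x, U x -> exists r, 0 < r /\ forall y, ball x r y -> U y.

Definition closure {n : nat} (A : Vec n -> Prop) (x : Vec n) : Prop :=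
  forall r, 0 < r -> exists y, A y /\ ball x r y.

Definition interior {n : nat} (A : Vec n -> Prop) (x : Vec n) : Prop :=
  exists r, 0 < r /\ forall y, ball x r y -> A y.

Definition boundary {n : nat} (A : Vec n -> Prop) (x : Vec n) : Prop :=
  closure A x /\ ~ interior A x.

Definition compact_set {m : nat} (P : Vec m -> Prop) : Prop :=
  forall (I : Type) (U : I -> Vec m -> Prop),
    (forall i, is_open (U i)) ->
    (forall p, P p -> exists i, U i p) ->
    exists l : list I, forall p, P p -> exists i, In i l /\ U i p.

Definition converges_to {n : nat} (y : R -> Vec n) (x : Vec n) : Prop :=
  forall eps, 0 < eps -> exists T, forall t, T <= t -> ball x eps (y t).

Definition continuous_xp {n m : nat} (D : Vec n -> Prop) (P : Vec m -> Prop)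
    (f : Vec n -> Vec m -> Vec n) : Prop :=
  forall x p, D x -> P p -> forall eps, 0 < eps -> exists delta, 0 < delta /\
    forall y q, D y -> P q -> ball x delta y -> ball p delta q ->
      ball (f x p) eps (f y q).

Definition loc_lipschitz_x {n m : nat} (D : Vec n -> Prop) (P : Vec m -> Prop)
    (f : Vec n -> Vec m -> Vec n) : Prop :=
  forall x0 p0, D x0 -> P p0 -> exists r L, 0 < r /\
    forall y z q, D y -> D z -> P q -> ball x0 r y -> ball x0 r z -> ball p0 r q ->
      forall M, (forall j, Rabs (y j - z j) <= M) ->
        forall i, Rabs (f y q i - f z q i) <= L * M.

Definition is_flow {n m : nat} (D : Vec n -> Prop) (P : Vec m -> Prop)
    (f : Vec n -> Vec m -> Vec n) (phi : R -> Vec n -> Vec m -> Vec n) : Prop :=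
  forall x0 p, D x0 -> P p ->
    phi 0 x0 p = x0 /\
    (forall eps, 0 < eps -> exists delta, 0 < delta /\
       forall s, 0 <= s < delta -> ball x0 eps (phi s x0 p)) /\
    (forall t, 0 < t -> forall i : 'I_n,
       derivable_pt_lim (fun s => phi s x0 p i) t (f (phi t x0 p) p i)).

Definition basin {n m : nat} (D : Vec n -> Prop)
    (phi : R -> Vec n -> Vec m -> Vec n) (p : Vec m) (xe : Vec n) (x : Vec n) : Prop :=
  D x /\ converges_to (fun t => phi t x p) xe.

Definition forward_invariant {n m : nat} (D : Vec n -> Prop)
    (phi : R -> Vec n -> Vec m -> Vec n) (p : Vec m) : Prop :=
  forall x t, D x -> 0 <= t -> D (phi t x p).

Definition equilibrium {n m : nat} (D : Vec n -> Prop)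
    (f : Vec n -> Vec m -> Vec n) (p : Vec m) (xe : Vec n) : Prop :=
  D xe /\ f xe p = (fun _ => 0).

Definition asympt_stable {n m : nat} (D : Vec n -> Prop)
    (f : Vec n -> Vec m -> Vec n) (phi : R -> Vec n -> Vec m -> Vec n)
    (p : Vec m) (xe : Vec n) : Prop :=
  equilibrium D f p xe /\
  (forall eps, 0 < eps -> exists delta, 0 < delta /\
     forall y, D y -> ball xe delta y -> forall t, 0 <= t -> ball xe eps (phi t y p)) /\
  (exists delta, 0 < delta /\
     forall y, D y -> ball xe delta y -> converges_to (fun t => phi t y p) xe).

Definition bistable {n m : nat} (D : Vec n -> Prop)
    (f : Vec n -> Vec m -> Vec n) (phi : R -> Vec n -> Vec m -> Vec n)
    (p : Vec m) (xs xb : Vec n) : Prop :=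
  forward_invariant D phi p /\
  xs <> xb /\
  asympt_stable D f phi p xs /\ asympt_stable D f phi p xb /\
  (forall xe, asympt_stable D f phi p xe -> xe = xs \/ xe = xb) /\
  (forall x, D x -> ~ basin D phi p xs x -> ~ basin D phi p xb x ->
     boundary (basin D phi p xs) x /\ boundary (basin D phi p xb) x) /\
  (forall x, closure (basin D phi p xb) x <->
             closure (fun y => D y /\ ~ basin D phi p xs y) x).

Definition monotone_xp {n m : nat} (D : Vec n -> Prop) (P : Vec m -> Prop)
    (phi : R -> Vec n -> Vec m -> Vec n) : Prop :=
  forall t x y p q, 0 <= t -> D x -> D y -> P p -> P q ->
    vle x y -> vle p q -> vle (phi t x p) (phi t y q).

(* Main.v *)
Require Import Defs.
From Stdlib Require Import Reals Lra Classical FunctionalExtensionality.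
From mathcomp Require Import ssreflect ssrbool eqtype seq fintype.
Open Scope R_scope.

Lemma le_eps (x y : R) : (forall eps, 0 < eps -> x < y + eps) -> x <= y.
Proof.
  intros H. destruct (Rle_or_lt x y) as [Hl|Hl]; [exact Hl|].
  specialize (H (x - y)). lra.
Qed.

Lemma fin_delta {n : nat} (Q : 'I_n -> R -> Prop) :
  (forall i d d', 0 < d' <= d -> Q i d -> Q i d') ->
  (forall i, exists d, 0 < d /\ Q i d) -> exists d, 0 < d /\ forall i, Q i d.
Proof.
  intros Hmon Hex.
  assert (Hl : forall l : seq 'I_n, exists d, 0 < d /\ forall i, i \in l -> Q i d).
  { induction l as [|a l IH].
    - exists 1. split; [lra|]. intros i Hi. by rewrite in_nil in Hi.
    - destruct IH as [d1 [Hd1 H1]]. destruct (Hex a) as [d2 [Hd2 H2]].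
      exists (Rmin d1 d2). split; [apply Rmin_pos; lra|].
      intros i Hi. rewrite in_cons in Hi. case/orP: Hi => Hi.
      + move/eqP: Hi => ->. apply (Hmon a d2); [|exact H2].
        split; [apply Rmin_pos; lra| apply Rmin_r].
      + apply (Hmon i d1); [|by apply H1].
        split; [apply Rmin_pos; lra| apply Rmin_l]. }
  destruct (Hl (enum 'I_n)) as [d [Hd H]]. exists d. split; [exact Hd|].
  intros i. apply H. by rewrite mem_enum.
Qed.

Lemma fin_bound {n : nat} (g : 'I_n -> R) : exists V, forall i, g i <= V.
Proof.
  assert (Hl : forall l : seq 'I_n, exists V, forall i, i \in l -> g i <= V).
  { induction l as [|a l IH].
    - exists 0. intros i Hi. by rewrite in_nil in Hi.
    - destruct IH as [V H]. exists (Rmax V (g a)).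
      intros i Hi. rewrite in_cons in Hi. case/orP: Hi => Hi.
      + move/eqP: Hi => ->. apply Rmax_r.
      + eapply Rle_trans; [by apply H| apply Rmax_l]. }
  destruct (Hl (enum 'I_n)) as [V H]. exists V. intros i. apply H. by rewrite mem_enum.
Qed.

Lemma cont_of_der (g : R -> R) t l : derivable_pt_lim g t l ->
  forall eps, 0 < eps -> exists del, 0 < del /\ forall s, Rabs (s - t) < del -> Rabs (g s - g t) < eps.
Proof.
  intros H. have Hc := derivable_continuous_pt g t (exist _ l H).
  intros eps Heps. unfold continuity_pt, continue_in, limit1_in, limit_in in Hc.
  destruct (Hc eps Heps) as [a [Ha Hb]]. exists a. split; [lra|].
  intros s Hs. destruct (Req_dec s t) as [->|Hne].
  - rewrite Rminus_diag Rabs_R0. lra.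
  - apply (Hb s). split; [unfold D_x, no_cond; split; auto|]. simpl. unfold R_dist. exact Hs.
Qed.

Lemma mvi (g dg : R -> R) (b K : R) : 0 < b ->
  (forall c, 0 < c <= b -> derivable_pt_lim g c (dg c)) ->
  (forall c, 0 < c < b -> Rabs (dg c) <= K) ->
  (forall eps, 0 < eps -> exists del, 0 < del /\ forall s, 0 <= s < del -> Rabs (g s - g 0) < eps) ->
  Rabs (g b - g 0) <= K * b.
Proof.
  intros Hb Hd HK Hr. apply le_eps. intros eps Heps.
  destruct (Hr eps Heps) as [del [Hdel Hs]].
  set a := Rmin (del/2) (b/2).
  have Ha0 : 0 < a by apply Rmin_pos; lra.
  have Hab : a < b by (unfold a; eapply Rle_lt_trans; [apply Rmin_r| lra]).
  have Had : a < del by (unfold a; eapply Rle_lt_trans; [apply Rmin_l| lra]).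
  destruct (MVT_cor2 g dg a b Hab) as [c [Hc1 Hc2]].
  { intros c Hc. apply Hd. lra. }
  have HKc := HK c ltac:(lra).
  have HK0 : 0 <= K by (eapply Rle_trans; [apply Rabs_pos| exact HKc]).
  have H1 : Rabs (g b - g a) <= K * (b - a).
  { rewrite Hc1 Rabs_mult (Rabs_right (b - a)); [|lra].
    apply Rmult_le_compat_r; lra. }
  have H2 := Hs a ltac:(lra).
  replace (g b - g 0) with ((g b - g a) + (g a - g 0)) by ring.
  eapply Rle_lt_trans; [apply Rabs_triang|]. nra.
Qed.

Lemma real_ind (Q : R -> Prop) :
  (forall s, 0 <= s -> (forall t, 0 <= t < s -> Q t) ->
     exists h, 0 < h /\ forall t, s <= t < s + h -> Q t) ->
  forall t, 0 <= t -> Q t.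
Proof.
  intros Hstep t0 Ht0. apply NNPP. intros Hn.
  set E := fun s => 0 <= s /\ forall t, 0 <= t < s -> Q t.
  have HE0 : E 0 by (split; [lra| intros t Ht; lra]).
  have Hub : forall s, E s -> s <= t0.
  { intros s [Hs1 Hs2]. destruct (Rle_or_lt s t0) as [|Hlt]; [assumption|].
    exfalso. apply Hn, Hs2. lra. }
  destruct (completeness E) as [S [HS1 HS2]].
  { exists t0. intros s Hs. by apply Hub. }
  { exists 0. exact HE0. }
  have HS0 : 0 <= S by apply HS1.
  have Hbelow : forall t, 0 <= t < S -> Q t.
  { intros t Ht. apply NNPP. intros HQ.
    have : S <= t.
    { apply HS2. intros s [Hs1 Hs2]. destruct (Rle_or_lt s t) as [|Hlt]; [assumption|].
      exfalso. apply HQ, Hs2. lra. }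
    lra. }
  destruct (Hstep S HS0 Hbelow) as [h [Hh HQ]].
  have : E (S + h).
  { split; [lra|]. intros t Ht. destruct (Rlt_or_le t S).
    - apply Hbelow; lra.
    - apply HQ; lra. }
  move=> HE. have := HS1 _ HE. lra.
Qed.

Lemma geo_lim (x a B : R) : 0 <= B -> (forall k, x <= a + B * (/2) ^ k) -> x <= a.
Proof.
  intros HB H. apply le_eps. intros eps Heps.
  destruct (Req_dec B 0) as [->|HBn].
  - specialize (H O). lra.
  - have HBp : 0 < B by lra.
    destruct (pow_lt_1_zero (/2) ltac:(rewrite Rabs_right; lra) (eps / B) ltac:(apply Rdiv_lt_0_compat; lra)) as [N HN].
    specialize (HN N (le_n N)). specialize (H N).
    rewrite Rabs_right in HN; [| apply Rle_ge, pow_le; lra].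
    have : B * (/2)^N < eps.
    { apply (Rmult_lt_compat_l B) in HN; [|lra]. by field_simplify in HN. }
    lra.
Qed.

Definition sol {n m : nat} (D : Vec n -> Prop) (f : Vec n -> Vec m -> Vec n)
  (p : Vec m) (u : R -> Vec n) : Prop :=
  (forall s, 0 <= s -> D (u s)) /\
  (forall eps, 0 < eps -> exists del, 0 < del /\ forall s, 0 <= s < del -> ball (u 0) eps (u s)) /\
  (forall t, 0 < t -> forall i, derivable_pt_lim (fun s => u s i) t (f (u t) p i)).

Lemma sol_cont {n m} D f (p : Vec m) (u : R -> Vec n) : sol D f p u -> forall s, 0 < s ->
  forall eps, 0 < eps -> exists del, 0 < del /\ forall t, Rabs (t - s) < del -> ball (u s) eps (u t).
Proof.
  intros [_ [_ Hd]] s Hs eps Heps.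
  destruct (fin_delta (fun i del => forall t, Rabs (t - s) < del -> Rabs (u t i - u s i) < eps)) as [d [Hd0 Hd1]].
  - intros i d d' Hd' H t Ht. apply H. lra.
  - intros i. apply (cont_of_der (fun t => u t i) s _ (Hd s Hs i) eps Heps).
  - exists d. split; [exact Hd0|]. intros t Ht i. by apply Hd1.
Qed.

Lemma sol_rcont {n m} D f (p : Vec m) (u : R -> Vec n) : sol D f p u -> forall s, 0 <= s ->
  forall eps, 0 < eps -> exists del, 0 < del /\ forall t, s <= t < s + del -> ball (u s) eps (u t).
Proof.
  intros Hs s Hs0 eps Heps. destruct (Req_dec s 0) as [->|Hne].
  - destruct Hs as [_ [Hr _]]. destruct (Hr eps Heps) as [d [Hd H]].
    exists d. split; [exact Hd|]. intros t Ht. apply H. lra.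
  - destruct (sol_cont D f p u Hs s ltac:(lra) eps Heps) as [d [Hd H]].
    exists d. split; [exact Hd|]. intros t Ht. apply H. rewrite Rabs_right; lra.
Qed.

Lemma sol_shift {n m} D f (p : Vec m) (u : R -> Vec n) T : sol D f p u -> 0 <= T ->
  sol D f p (fun s => u (T + s)).
Proof.
  intros Hs HT. split; [|split].
  - intros s Hs0. apply Hs. lra.
  - intros eps Heps. destruct (sol_rcont D f p u Hs T HT eps Heps) as [d [Hd H]].
    exists d. split; [exact Hd|]. intros s Hs0. rewrite Rplus_0_r. apply H. lra.
  - intros t Ht i. destruct Hs as [_ [_ Hd]].
    have H := Hd (T + t) ltac:(lra) i.
    intros eps Heps. destruct (H eps Heps) as [d Hd'].
    exists d. intros h Hh Hhd. simpl.
    replace (T + (t + h)) with (T + t + h) by ring. by apply Hd'.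
Qed.

Definition vdist_le {n : nat} (x y : Vec n) (M : R) := forall i, Rabs (x i - y i) <= M.

Lemma local_est {n m} (D : Vec n -> Prop) (P : Vec m -> Prop) f p z0 :
  loc_lipschitz_x D P f -> D z0 -> P p ->
  exists rho h, 0 < rho /\ 0 < h /\
    forall u v M0, sol D f p u -> sol D f p v -> ball z0 rho (u 0) -> ball z0 rho (v 0) ->
      0 <= M0 -> vdist_le (u 0) (v 0) M0 ->
      forall t, 0 <= t <= h -> vdist_le (u t) (v t) (2 * M0).
Proof.
  intros Hlip Hz0 Hp.
  destruct (Hlip z0 p Hz0 Hp) as [r [L [Hr HL]]].
  set L' := Rabs L + 1.
  have HL'0 : 0 < L' by (unfold L'; have := Rabs_pos L; lra).
  have HLip : forall y z, D y -> D z -> ball z0 r y -> ball z0 r z -> forall M, 0 <= M ->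
     (forall j, Rabs (y j - z j) <= M) -> forall i, Rabs (f y p i - f z p i) <= L' * M.
  { intros y z Hy Hz Hby Hbz M HM HMj i.
    eapply Rle_trans; [apply (HL y z p Hy Hz Hp Hby Hbz)|].
    - intros j. rewrite Rminus_diag Rabs_R0. exact Hr.
    - exact HMj.
    - unfold L'. have := Rle_abs L. nra. }
  destruct (fin_bound (fun i => Rabs (f z0 p i))) as [V0 HV0].
  set V := Rabs V0 + L' * r + 1.
  have HV : 0 < V by (unfold V; have := Rabs_pos V0; nra).
  have Hspeed : forall w, D w -> ball z0 r w -> forall i, Rabs (f w p i) <= V.
  { intros w Hw Hbw i.
    have H := HLip w z0 Hw Hz0 Hbw ltac:(intros j; rewrite Rminus_diag Rabs_R0; lra) r ltac:(lra)
       ltac:(intros j; apply Rlt_le, Hbw) i.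
    have := HV0 i. have := Rle_abs V0. have := Rabs_triang_inv (f w p i) (f z0 p i).
    unfold V. lra. }
  set rho := r / 2.
  set h := Rmin (r / (4 * V)) (/ (2 * L')).
  have Hh : 0 < h by (apply Rmin_pos; [apply Rdiv_lt_0_compat; lra| apply Rinv_0_lt_compat; lra]).
  have HhV : h * V <= r / 4.
  { have : h <= r / (4 * V) by apply Rmin_l.
    intros H. apply (Rmult_le_compat_r V) in H; [|lra].
    replace (r / (4 * V) * V) with (r / 4) in H by (field; lra). exact H. }
  have HhL : h * L' <= / 2.
  { have : h <= / (2 * L') by apply Rmin_r.
    intros H. apply (Rmult_le_compat_r L') in H; [|lra].
    replace (/ (2 * L') * L') with (/ 2) in H by (field; lra). exact H. }
  have Hstay : forall u, sol D f p u -> ball z0 rho (u 0) -> forall t, 0 <= t <= h -> ball z0 r (u t).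
  { intros u Hu Hu0.
    have Hall : forall t, 0 <= t -> t <= h -> ball z0 r (u t).
    { apply (real_ind (fun t => t <= h -> ball z0 r (u t))). intros s Hs IH.
      destruct (Rle_or_lt s h) as [Hsh|Hsh].
      - have A : forall i, Rabs (u s i - z0 i) < 3 * r / 4.
        { intros i. destruct (Req_dec s 0) as [->|Hs0].
          - have := Hu0 i. rewrite Rabs_minus_sym. unfold rho. lra.
          - have Hm := mvi (fun t => u t i) (fun c => f (u c) p i) s V ltac:(lra)
              ltac:(intros c Hc; apply Hu; lra)
              ltac:(intros c Hc; apply Hspeed; [apply Hu; lra| apply IH; lra]).
            have Hm2 : Rabs (u s i - u 0 i) <= V * s.
            { apply Hm. intros eps Heps. destruct Hu as [_ [Hr0 _]].
              destruct (Hr0 eps Heps) as [d [Hd Hd']]. exists d. split; [exact Hd|].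
              intros t Ht. have := Hd' t Ht i. by rewrite Rabs_minus_sym. }
            have := Hu0 i. intros H1.
            replace (u s i - z0 i) with ((u s i - u 0 i) + (u 0 i - z0 i)) by ring.
            eapply Rle_lt_trans; [apply Rabs_triang|].
            have : V * s <= h * V by (rewrite (Rmult_comm h); apply Rmult_le_compat_l; lra).
            unfold rho in H1. lra. }
        destruct (sol_rcont D f p u Hu s Hs (r / 4) ltac:(lra)) as [d [Hd Hd']].
        exists d. split; [exact Hd|]. intros t Ht _ i.
        have := Hd' t Ht i. have := A i.
        replace (u t i - z0 i) with ((u t i - u s i) + (u s i - z0 i)) by ring.
        intros H1 H2. eapply Rle_lt_trans; [apply Rabs_triang|]. lra.
      - exists 1. split; [lra|]. intros t Ht Hth. lra. }
    intros t Ht. apply Hall; lra. }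
  exists rho, h. split; [unfold rho; lra|]. split; [exact Hh|].
  intros u v M0 Hu Hv Hu0 Hv0 HM0 Hd0.
  have Hbu := Hstay u Hu Hu0. have Hbv := Hstay v Hv Hv0.
  set B := 2 * r.
  have Hk : forall k, forall t, 0 <= t <= h -> vdist_le (u t) (v t) (2 * M0 + B * (/2) ^ k).
  { induction k as [|k IH].
    - intros t Ht i. simpl. have := Hbu t Ht i. have := Hbv t Ht i.
      intros H1 H2. replace (u t i - v t i) with ((u t i - z0 i) - (v t i - z0 i)) by ring.
      eapply Rle_trans; [apply Rabs_triang|]. rewrite Rabs_Ropp. unfold B. lra.
    - have Hpk : 0 <= (/2)^k by (apply pow_le; lra).
      set bk := 2 * M0 + B * (/2)^k.
      have Hbk : 0 <= bk by (unfold bk, B; nra).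
      intros t Ht i.
      have Hfin : M0 + bk / 2 = 2 * M0 + B * (/2)^(S k) by (unfold bk; simpl; field).
      rewrite -Hfin.
      destruct (Req_dec t 0) as [->|Ht0].
      + have := Hd0 i. lra.
      + have Hm := mvi (fun s => u s i - v s i) (fun c => f (u c) p i - f (v c) p i) t (L' * bk) ltac:(lra)
          ltac:(intros c Hc; apply derivable_pt_lim_minus; [apply Hu| apply Hv]; lra)
          ltac:(intros c Hc; apply HLip; [apply Hu; lra| apply Hv; lra| apply Hbu; lra| apply Hbv; lra| exact Hbk| apply IH; lra]).
        have Hm2 : Rabs ((u t i - v t i) - (u 0 i - v 0 i)) <= L' * bk * t.
        { apply Hm. intros eps Heps.
          destruct Hu as [_ [Hr1 _]]. destruct Hv as [_ [Hr2 _]].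
          destruct (Hr1 (eps/2) ltac:(lra)) as [d1 [Hd1 Hd1']].
          destruct (Hr2 (eps/2) ltac:(lra)) as [d2 [Hd2 Hd2']].
          exists (Rmin d1 d2). split; [apply Rmin_pos; lra|].
          intros s Hs. have Hs1 : s < d1 by (eapply Rlt_le_trans; [apply Hs| apply Rmin_l]).
          have Hs2 : s < d2 by (eapply Rlt_le_trans; [apply Hs| apply Rmin_r]).
          have := Hd1' s ltac:(lra) i. have := Hd2' s ltac:(lra) i.
          replace (u s i - v s i - (u 0 i - v 0 i)) with ((u s i - u 0 i) - (v s i - v 0 i)) by ring.
          intros H1 H2. eapply Rle_lt_trans; [apply Rabs_triang|]. rewrite Rabs_Ropp.
          lra. }
        have H3 : L' * bk * t <= bk / 2.
        { have : t * L' <= h * L' by (apply Rmult_le_compat_r; lra).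
          intros H. have : t * L' <= /2 by lra. nra. }
        have := Hd0 i. intros H4.
        replace (u t i - v t i) with (((u t i - v t i) - (u 0 i - v 0 i)) + (u 0 i - v 0 i)) by ring.
        eapply Rle_trans; [apply Rabs_triang|]. lra. }
  intros t Ht i. apply (geo_lim _ _ B); [unfold B; lra|]. intros k. apply Hk. exact Ht.
Qed.

Lemma sol_unique {n m} (D : Vec n -> Prop) (P : Vec m -> Prop) f p u v :
  loc_lipschitz_x D P f -> P p -> sol D f p u -> sol D f p v -> (forall i, u 0 i = v 0 i) ->
  forall t, 0 <= t -> forall i, u t i = v t i.
Proof.
  intros Hlip Hp Hu Hv H0.
  apply (real_ind (fun t => forall i, u t i = v t i)). intros s Hs IH.
  have Hs_eq : forall i, u s i = v s i.
  { destruct (Req_dec s 0) as [->|Hs0]; [exact H0|].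
    intros i. apply NNPP. intros Hne.
    set e := Rabs (u s i - v s i) / 2.
    have He : 0 < e by (unfold e; have := Rabs_pos_lt (u s i - v s i) ltac:(lra); lra).
    destruct (sol_cont D f p u Hu s ltac:(lra) e He) as [d1 [Hd1 Hd1']].
    destruct (sol_cont D f p v Hv s ltac:(lra) e He) as [d2 [Hd2 Hd2']].
    set t := s - Rmin (Rmin d1 d2) s / 2.
    have Hm : 0 < Rmin (Rmin d1 d2) s by (repeat apply Rmin_pos; lra).
    have Hm1 : Rmin (Rmin d1 d2) s <= d1 by (eapply Rle_trans; [apply Rmin_l| apply Rmin_l]).
    have Hm2 : Rmin (Rmin d1 d2) s <= d2 by (eapply Rle_trans; [apply Rmin_l| apply Rmin_r]).
    have Hm3 : Rmin (Rmin d1 d2) s <= s by apply Rmin_r.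
    have Hts : Rabs (t - s) < Rmin (Rmin d1 d2) s by (unfold t; rewrite Rabs_left; lra).
    have A1 := Hd1' t ltac:(lra) i. have A2 := Hd2' t ltac:(lra) i.
    rewrite (IH t ltac:(unfold t; lra)) in A1.
    have : Rabs (u s i - v s i) < 2 * e.
    { replace (u s i - v s i) with (-(v t i - u s i) + (v t i - v s i)) by ring.
      eapply Rle_lt_trans; [apply Rabs_triang|]. rewrite Rabs_Ropp. lra. }
    unfold e. lra. }
  have HDs : D (u s) by (apply Hu; lra).
  destruct (local_est D P f p (u s) Hlip HDs Hp) as [rho [h [Hrho [Hh HL]]]].
  exists h. split; [exact Hh|]. intros t Ht i.
  have Hsu := sol_shift D f p u s Hu Hs. have Hsv := sol_shift D f p v s Hv Hs.
  have := HL _ _ 0 Hsu Hsv ltac:(intros j; rewrite Rplus_0_r Rminus_diag Rabs_R0; lra)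
     ltac:(intros j; rewrite Rplus_0_r -Hs_eq Rminus_diag Rabs_R0; lra)
     ltac:(lra) ltac:(intros j; rewrite !Rplus_0_r Hs_eq Rminus_diag Rabs_R0; lra)
     (t - s) ltac:(lra) i.
  replace (s + (t - s)) with t by ring. intros H.
  have := Rabs_pos (u t i - v t i). intros H'.
  have : Rabs (u t i - v t i) = 0 by lra.
  intros H2. apply Rminus_diag_uniq. destruct (Req_dec (u t i - v t i) 0) as [|Hn]; [assumption|]. have := Rabs_pos_lt _ Hn. lra.
Qed.

Section Flow.
Context {n m : nat} (D : Vec n -> Prop) (P : Vec m -> Prop) (f : Vec n -> Vec m -> Vec n)
  (phi : R -> Vec n -> Vec m -> Vec n) (p : Vec m)
  (Hlip : loc_lipschitz_x D P f) (Hp : P p)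
  (Hsol : forall y, D y -> sol D f p (fun t => phi t y p) /\ phi 0 y p = y).

Lemma cont_dep x : D x -> forall T, 0 <= T -> forall eps, 0 < eps ->
  exists r, 0 < r /\ forall y, D y -> ball x r y -> ball (phi T x p) eps (phi T y p).
Proof.
  intros Hx. destruct (Hsol x Hx) as [Hux Hx0].
  have Q0 : forall eps, 0 < eps ->
    exists r, 0 < r /\ forall y, D y -> ball x r y -> ball (phi 0 x p) eps (phi 0 y p).
  { intros eps Heps. exists eps. split; [exact Heps|]. intros y Hy Hb.
    rewrite Hx0 (proj2 (Hsol y Hy)). exact Hb. }
  apply (real_ind (fun T => forall eps, 0 < eps ->
    exists r, 0 < r /\ forall y, D y -> ball x r y -> ball (phi T x p) eps (phi T y p))).
  intros s Hs IH.
  have HDs : D (phi s x p) by (apply Hux; lra).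
  destruct (local_est D P f p (phi s x p) Hlip HDs Hp) as [rho [h [Hrho [Hh HL]]]].
  have [s' [Hs'0 [Hs's [Hs'h [Hclose HQ]]]]] : exists s', 0 <= s' /\ s' <= s /\ s - s' <= h / 2 /\
     ball (phi s x p) (rho / 2) (phi s' x p) /\
     (forall eps, 0 < eps ->
       exists r, 0 < r /\ forall y, D y -> ball x r y -> ball (phi s' x p) eps (phi s' y p)).
  { destruct (Req_dec s 0) as [->|Hs0].
    - exists 0. split; [lra|]. split; [lra|]. split; [lra|]. split; [|exact Q0].
      intros i. rewrite Rminus_diag Rabs_R0. lra.
    - destruct (sol_cont D f p _ Hux s ltac:(lra) (rho/2) ltac:(lra)) as [d [Hd Hd']].
      set s' := Rmax 0 (s - Rmin d h / 2).
      have Hmd : 0 < Rmin d h by (apply Rmin_pos; lra).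
      have Hmd1 : Rmin d h <= d by apply Rmin_l.
      have Hmd2 : Rmin d h <= h by apply Rmin_r.
      have A1 : 0 <= s' by apply Rmax_l.
      have A2 : s - Rmin d h / 2 <= s' by apply Rmax_r.
      have A3 : s' < s by (unfold s'; apply Rmax_lub_lt; lra).
      exists s'. split; [exact A1|]. split; [lra|]. split; [lra|]. split.
      + apply Hd'. rewrite Rabs_left; lra.
      + apply IH. lra. }
  exists (h / 2). split; [lra|]. intros t Ht eps Heps.
  set e' := Rmin (eps / 4) (rho / 2).
  have He' : 0 < e' by (apply Rmin_pos; lra).
  have He'1 : e' <= eps / 4 by apply Rmin_l.
  have He'2 : e' <= rho / 2 by apply Rmin_r.
  destruct (HQ e' He') as [r [Hr Hr']].
  exists r. split; [exact Hr|]. intros y Hy Hby.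
  have Hb := Hr' y Hy Hby.
  have Hsu := sol_shift D f p _ s' Hux Hs'0.
  have Hsv := sol_shift D f p _ s' (proj1 (Hsol y Hy)) Hs'0.
  have := HL _ _ e' Hsu Hsv.
  rewrite !Rplus_0_r.
  intros HL'. have HL2 := HL' ltac:(intros i; have := Hclose i; rewrite Rabs_minus_sym; lra)
    ltac:(intros i; have := Hclose i; have := Hb i;
          replace (phi s' y p i - phi s x p i) with ((phi s' y p i - phi s' x p i) + (phi s' x p i - phi s x p i)) by ring;
          intros H1 H2; eapply Rle_lt_trans; [apply Rabs_triang|]; lra)
    ltac:(lra) ltac:(intros i; have := Hb i; rewrite Rabs_minus_sym; lra)
    (t - s') ltac:(lra).
  intros i. have := HL2 i. replace (s' + (t - s')) with t by ring.
  rewrite Rabs_minus_sym. lra.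
Qed.

Lemma basin_open xe x : (exists delta, 0 < delta /\
     forall y, D y -> ball xe delta y -> converges_to (fun t => phi t y p) xe) ->
  basin D phi p xe x -> exists r, 0 < r /\ forall y, D y -> ball x r y -> basin D phi p xe y.
Proof.
  intros [del [Hdel Hatt]] [Hx Hcx].
  destruct (Hcx (del/2) ltac:(lra)) as [T0 HT0].
  set T := Rmax 0 T0.
  have HT : 0 <= T by apply Rmax_l.
  have HT1 : T0 <= T by apply Rmax_r.
  destruct (cont_dep x Hx T HT (del/2) ltac:(lra)) as [r [Hr Hr']].
  exists r. split; [exact Hr|]. intros y Hy Hby. split; [exact Hy|].
  have Hw : D (phi T y p) by (apply (proj1 (Hsol y Hy)); exact HT).
  have Hcw : converges_to (fun t => phi t (phi T y p) p) xe.
  { apply Hatt; [exact Hw|]. intros i. have := Hr' y Hy Hby i. have := HT0 T HT1 i.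
    replace (phi T y p i - xe i) with ((phi T y p i - phi T x p i) + (phi T x p i - xe i)) by ring.
    intros H1 H2. eapply Rle_lt_trans; [apply Rabs_triang|]. lra. }
  have Hun := sol_unique D P f p _ _ Hlip Hp (sol_shift D f p _ T (proj1 (Hsol y Hy)) HT)
     (proj1 (Hsol _ Hw)) ltac:(intros i; cbv beta; rewrite Rplus_0_r (proj2 (Hsol _ Hw)); reflexivity).
  intros eps Heps. destruct (Hcw eps Heps) as [T1 HT1'].
  exists (T + Rmax 0 T1). intros t Ht.
  have Hm0 : 0 <= Rmax 0 T1 by apply Rmax_l.
  have Hm1 : T1 <= Rmax 0 T1 by apply Rmax_r.
  intros i. have := Hun (t - T) ltac:(lra) i. replace (T + (t - T)) with t by ring.
  intros ->. apply HT1'. lra.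
Qed.

End Flow.

Lemma lim_le {n} (u v : R -> Vec n) a b : converges_to u a -> converges_to v b ->
  (forall t, 0 <= t -> vle (u t) (v t)) -> vle a b.
Proof.
  intros Hu Hv Hle i. destruct (Rle_or_lt (a i) (b i)) as [|Hlt]; [assumption|].
  exfalso. set e := (a i - b i) / 2.
  destruct (Hu e ltac:(unfold e; lra)) as [T1 H1].
  destruct (Hv e ltac:(unfold e; lra)) as [T2 H2].
  set t := Rmax 0 (Rmax T1 T2).
  have Ht0 : 0 <= t by apply Rmax_l.
  have Ht1 : T1 <= t by (eapply Rle_trans; [apply Rmax_l| apply Rmax_r]).
  have Ht2 : T2 <= t by (eapply Rle_trans; [apply Rmax_r| apply Rmax_r]).
  have A1 := H1 t Ht1 i. have A2 := H2 t Ht2 i. have A3 := Hle t Ht0 i.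
  apply Rabs_def2 in A1. apply Rabs_def2 in A2. unfold e in *. lra.
Qed.

Theorem mainTheorem4 (n m : nat) (D : Vec n -> Prop) (P : Vec m -> Prop)
    (f : Vec n -> Vec m -> Vec n) (phi : R -> Vec n -> Vec m -> Vec n)
    (xs xb : Vec m -> Vec n) (pmin pmax : Vec m)
    (Hcont : continuous_xp D P f)
    (Hlip : loc_lipschitz_x D P f)
    (Hflow : is_flow D P f phi)
    (* (A1) *)
    (A1_bist : forall p, P p -> bistable D f phi p (xs p) (xb p))
    (A1_mono : monotone_xp D P phi)
    (* (A2) *)
    (A2_comp : compact_set P)
    (A2_min : P pmin) (A2_max : P pmax)
    (A2_bnd : forall p, P p -> vle pmin p /\ vle p pmax)
    (* (A3) *)
    (A3_s : forall p, P p -> forall q, P q -> basin D phi q (xs q) (xs p))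
    (A3_b : forall p, P p -> forall q, P q -> basin D phi q (xb q) (xb p))
    (* (A4) *)
    (A4 : vgg (xb pmin) (xs pmax)) :
  forall p1 p2, P p1 -> P p2 -> vle p2 p1 ->
    (forall x, basin D phi p1 (xs p1) x -> basin D phi p2 (xs p2) x) /\
    (forall x, basin D phi p2 (xb p2) x -> basin D phi p1 (xb p1) x).
Proof.
  intros p1 p2 Hp1 Hp2 H21.
  have Hsol : forall p, P p -> forall y, D y -> sol D f p (fun t => phi t y p) /\ phi 0 y p = y.
  { intros p Hp y Hy. destruct (Hflow y p Hy Hp) as [H0 [Hr Hd]].
    split; [|exact H0]. split; [|split].
    - intros s Hs. exact (proj1 (A1_bist p Hp) y s Hy Hs).
    - intros eps Heps. rewrite H0. exact (Hr eps Heps).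
    - exact Hd. }
  have vle_refl : forall k (x : Vec k), vle x x by (intros k x i; lra).
  have Hs_le : forall p, P p -> vle (xs p) (xs pmax).
  { intros p Hp. destruct (A3_s p Hp p Hp) as [HD Hc1].
    have Hc2 := proj2 (A3_s p Hp pmax A2_max).
    apply (lim_le _ _ _ _ Hc1 Hc2). intros t Ht.
    apply A1_mono; auto. apply (A2_bnd p Hp). }
  have Hb_ge : forall p, P p -> vle (xb pmin) (xb p).
  { intros p Hp. destruct (A3_b pmin A2_min p Hp) as [HD Hc2].
    have Hc1 := proj2 (A3_b pmin A2_min pmin A2_min).
    apply (lim_le _ _ _ _ Hc1 Hc2). intros t Ht.
    apply A1_mono; auto. apply (A2_bnd p Hp). }
  have [i0 _] : exists i0 : 'I_n, True.
  { apply NNPP. intros Hn. destruct (A1_bist p1 Hp1) as [_ [Hne _]]. apply Hne.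
    apply functional_extensionality. intros i. exfalso. apply Hn. exists i. exact I. }
  have noboth : forall y, basin D phi p1 (xs p1) y -> basin D phi p2 (xb p2) y -> False.
  { intros y [Hy Hc1] [_ Hc2].
    have H := lim_le _ _ _ _ Hc2 Hc1 ltac:(intros t Ht; apply A1_mono; auto) i0.
    have := Hs_le p1 Hp1 i0. have := Hb_ge p2 Hp2 i0. have := A4 i0. lra. }
  have attr : forall p, P p -> forall xe, asympt_stable D f phi p xe -> exists delta, 0 < delta /\
     forall y, D y -> ball xe delta y -> converges_to (fun t => phi t y p) xe.
  { intros p Hp xe [_ [_ H]]. exact H. }
  split.
  - intros x Hx. destruct (classic (basin D phi p2 (xs p2) x)) as [|H1]; [assumption|].
    destruct (classic (basin D phi p2 (xb p2) x)) as [H2|H2]; [exfalso; exact (noboth x Hx H2)|].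
    exfalso.
    destruct (A1_bist p2 Hp2) as [_ [_ [_ [_ [_ [Hbd _]]]]]].
    destruct (Hbd x (proj1 Hx) H1 H2) as [_ [Hcl _]].
    destruct (A1_bist p1 Hp1) as [_ [_ [HAS _]]].
    destruct (basin_open D P f phi p1 Hlip Hp1 (Hsol p1 Hp1) (xs p1) x (attr p1 Hp1 _ HAS) Hx) as [r [Hr Hr']].
    destruct (Hcl r Hr) as [y [Hy Hby]].
    exact (noboth y (Hr' y (proj1 Hy) Hby) Hy).
  - intros x Hx. destruct (classic (basin D phi p1 (xb p1) x)) as [|H1]; [assumption|].
    destruct (classic (basin D phi p1 (xs p1) x)) as [H2|H2]; [exfalso; exact (noboth x H2 Hx)|].
    exfalso.
    destruct (A1_bist p1 Hp1) as [_ [_ [_ [_ [_ [Hbd _]]]]]].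
    destruct (Hbd x (proj1 Hx) H2 H1) as [[Hcl _] _].
    destruct (A1_bist p2 Hp2) as [_ [_ [_ [HAS _]]]].
    destruct (basin_open D P f phi p2 Hlip Hp2 (Hsol p2 Hp2) (xb p2) x (attr p2 Hp2 _ HAS) Hx) as [r [Hr Hr']].
    destruct (Hcl r Hr) as [y [Hy Hby]].
    exact (noboth y Hy (Hr' y (proj1 Hy) Hby)).
Qed.
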